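(* Let $K$ be a field, $A=\{\alpha_1,\dots,\alpha_m\}\subset K$, $B=\{\beta_1,\dots,\beta_n\}\subset K$ finite sets with $|A|=m$, $|B|=n$, $f=\prod_{i}(x-\alpha_i)$, $g=\prod_j(x-\beta_j)$, and let $x$ be an indeterminate. Let $0\le k\le\min\{m-1,n-1\}$. Let $M_F$ be the $(m+1)\times(m+1)$ matrix whose columns are indexed by $c\in(\alpha_1,\dots,\alpha_m,x)$ (in this order), and whose column indexed by $c$ is $$\big(g(c)c^{m-k-1},\,g(c)c^{m-k-2},\dots,g(c),\,c^{k},\,c^{k-1},\dots,c,\,1\big)^T;$$ similarly let $M_G$ be the $(n+1)\times(n+1)$ matrix with columns indexed by $c\in(\beta_1,\dots,\beta_n,x)$, the column indexed by $c$ being $\big(f(c)c^{n-k-1},\dots,f(c),\,c^{k},\dots,1\big)^T$. Then $$F_k(f,g)=(-1)^{m-k}\frac{\det M_F}{\det V(\alpha_1,\dots,\alpha_m,x)},\qquad G_k(f,g)=(-1)^{(m-k-1)(n-k)}\frac{\det M_G}{\det V(\beta_1,\dots,\beta_n,x)}.$$ In particular $F_k(f,g)$ and $G_k(f,g)$ are symmetric polynomials in $A\cup\{x\}$ and $B\cup\{x\}$ respectively.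
   Context: For $c=(c_1,\dots,c_\ell)$, $V(c)$ is the $\ell\times\ell$ Vandermonde matrix whose $i$-th column is $(c_i^{\ell-1},\dots,c_i,1)^T$, so $\det V(c)=\prod_{1\le i<j\le \ell}(c_i-c_j)$. Write $f=\sum_{i=0}^m f_ix^i$, $g=\sum_{i=0}^ng_ix^i$ with $f_i=g_i=0$ outside the natural ranges. For $0\le k\le\min\{m-1,n-1\}$ consider the $(m+n-2k)\times(m+n-2k)$ matrices with rows indexed by $(f,j)$, $j=n-k-1,\dots,0$, followed by $(g,j)$, $j=m-k-1,\dots,0$, whose first $m+n-2k-1$ entries in row $(f,j)$ (resp. $(g,j)$) are the coefficients of $x^{m+n-k-1},\dots,x^{k+1}$ in $x^jf$ (resp. $x^jg$). $F_k(f,g)(x)$ is the determinant of such a matrix with last entry $x^j$ in rows $(f,j)$ and $0$ in rows $(g,j)$; $G_k(f,g)(x)$ is the determinant with last entry $0$ in rows $(f,j)$ and $x^j$ in rows $(g,j)$. *)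

(* Defs.v *)
From HB Require Import structures.
From mathcomp Require Import all_boot all_order all_algebra.
From mathcomp Require Import fraction.
Set Implicit Arguments. Unset Strict Implicit. Unset Printing Implicit Defensive.
Import GRing.Theory.
Local Open Scope ring_scope.

Definition vdm (R : nzRingType) (l : nat) (c : 'I_l -> R) : 'M[R]_l :=
  \matrix_(r < l, i < l) c i ^+ (l.-1 - r).

(* Rows i < n-k are (f, j) with j = n-k-1-i; rows i >= n-k are (g, j) with
   j = m+n-2k-1-i (so j runs m-k-1, ..., 0). *)
Definition subres_mx (K : fieldType) (m n k : nat) (f g : {poly K})
    (lastf lastg : nat -> {poly K}) : 'M[{poly K}]_(m + n - 2 * k) :=
  \matrix_(i < m + n - 2 * k, c < m + n - 2 * k)
    if (i < n - k)%N then
      (if (c < (m + n - 2 * k).-1)%N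
       then ((f * 'X^(n - k - 1 - i))`_(m + n - k - 1 - c))%:P
       else lastf (n - k - 1 - i)%N)
    else
      (if (c < (m + n - 2 * k).-1)%N
       then ((g * 'X^(m + n - 2 * k - 1 - i))`_(m + n - k - 1 - c))%:P
       else lastg (m + n - 2 * k - 1 - i)%N).

Definition Fk (K : fieldType) (m n k : nat) (f g : {poly K}) : {poly K} :=
  \det (subres_mx m n k f g (fun j => 'X^j) (fun _ => 0)).

Definition Gk (K : fieldType) (m n k : nat) (f g : {poly K}) : {poly K} :=
  \det (subres_mx m n k f g (fun _ => 0) (fun j => 'X^j)).

Definition pts_x (K : fieldType) (l : nat) (c : 'I_l -> K) (j : 'I_l.+1)
  : {poly K} :=
  if (j < l)%N =P true is ReflectT h then (c (Ordinal h))%:P else 'X.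

Definition Mmat (K : fieldType) (l k : nat) (h : {poly K}) (c : 'I_l -> K)
  : 'M[{poly K}]_l.+1 :=
  \matrix_(r < l.+1, j < l.+1)
    let p := pts_x c j in
    if (r < l - k)%N then (h \Po p) * p ^+ (l - k - 1 - r) else p ^+ (l - r).

Notation "x %:F" := (@FracField.tofrac _ x).

(* Main.v *)
Require Import Defs.
From HB Require Import structures.
From mathcomp Require Import all_boot all_order all_algebra.
From mathcomp Require Import fraction.
From mathcomp Require Import zify ring lra.
From mathcomp Require Import fingroup perm.
Set Implicit Arguments. Unset Strict Implicit. Unset Printing Implicit Defensive.
Import GRing.Theory.
Local Open Scope ring_scope.

Definition colsel (R : Type) (N1 D : nat) (a : nat -> R) (u : R) (c : nat) : R :=
  if (c < N1)%N then a (D - c)%N else if c == N1 then u else a (D.+1 - c)%N.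

Lemma colsel_bump (R : Type) N1 D (a : nat -> R) u i :
  colsel N1 D a u (bump N1 i) = a (D - i)%N.
Proof.
rewrite /colsel /bump; case: (ltnP i N1) => hi.
  by rewrite add0n hi.
rewrite add1n subSS.
have -> : (i.+1 < N1)%N = false by lia.
have -> : (i.+1 == N1) = false by lia.
done.
Qed.

Lemma colsel_sum (R : comPzRingType) (L N1 : nat) (a b : nat -> R) (u v : R) :
  (N1 < L)%N ->
  \sum_(c < L) colsel N1 L.-2 a u c * colsel N1 L.-2 b v c =
  u * v + \sum_(d < L.-1) a d * b d.
Proof.
move=> hN.
rewrite (bigD1_ord (Ordinal hN)) //=.
rewrite /colsel ltnn eqxx; congr (_ + _).
transitivity (\sum_(i < L.-1) a (L.-2 - i)%N * b (L.-2 - i)%N).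
  apply: eq_bigr => i _ /=.
  by have := colsel_bump N1 L.-2 a u i; have := colsel_bump N1 L.-2 b v i;
    rewrite /colsel => -> ->.
rewrite (reindex_inj rev_ord_inj) /=.
apply: eq_bigr => i _.
have i1 := ltn_ord i.
have -> : (L.-2 - (L.-1 - i.+1) = i)%N.
  case: L {hN} i i1 => [|[|L]] i i1 //=. 
  by rewrite subSS subKn // -ltnS.
done.
Qed.

Lemma det_castmx (R : comPzRingType) n1 n2 (e : n1 = n2) (A : 'M[R]_n1) :
  \det (castmx (e, e) A) = \det A.
Proof. by case: n2 / e; rewrite castmx_id. Qed.


Lemma comp_wide (K : fieldType) (p q : {poly K}) M : (size p <= M)%N ->
  p \Po q = \sum_(d < M) (p`_d)%:P * q ^+ d.
Proof.
move=> hM; rewrite comp_polyE (big_ord_widen M (fun i => p`_i *: q ^+ i) hM).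
rewrite big_mkcond /=; apply: eq_bigr => i _.
case: ifP => h; first by rewrite mul_polyC.
by rewrite nth_default ?mul0r // leqNgt h.
Qed.

Section Main.
Variables (K : fieldType) (m n k : nat) (alpha : 'I_m -> K) (f g : {poly K}).
Hypotheses (km : (k < m)%N) (kn : (k < n)%N) (szg : (size g <= n.+1)%N)
  (szf : (size f <= m.+1)%N) (f1 : f`_m = 1) (rootf : forall i, f.[alpha i] = 0).

Local Notation N := (m + n - 2 * k)%N.
Local Notation L := (n - k + m.+1)%N.
Local Notation D := (m + n - k - 1)%N.

Definition rowpoly (r : nat) : {poly K} :=
  if (r < n - k)%N then f * 'X^(n - k - 1 - r)
  else if (r < N)%N then g * 'X^(N - 1 - r) else 'X^(N + k - r).
Definition rowlast (r : nat) : {poly K} :=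
  if (r < n - k)%N then 'X^(n - k - 1 - r) else 0.
Definition pt (s : nat) : {poly K} := pts_x alpha (inord (s - (n - k)) : 'I_m.+1).
Definition phi (s d : nat) : {poly K} :=
  if (s < n - k)%N then (d == (D - s)%N)%:R else pt s ^+ d.
Definition psi (s : nat) : {poly K} :=
  if (s < n - k)%N then 0 else - (f \Po pt s).

Definition Big : 'M[{poly K}]_L :=
  \matrix_(r < L, c < L) colsel N.-1 D (fun d => ((rowpoly r)`_d)%:P) (rowlast r) c.
Definition Emx : 'M[{poly K}]_L :=
  \matrix_(c < L, s < L) colsel N.-1 D (phi s) (psi s) c.

Lemma eDL : D = L.-2.
Proof. lia. Qed.

Lemma size_rowpoly r : (size (rowpoly r) <= L.-1)%N.
Proof.
rewrite /rowpoly; case: ifP => h1.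
  apply: leq_trans (size_polyMleq _ _) _; rewrite size_polyXn; lia.
case: ifP => h2.
  apply: leq_trans (size_polyMleq _ _) _; rewrite size_polyXn; lia.
rewrite size_polyXn; lia.
Qed.

Lemma BigE_entry (r s : 'I_L) : (Big *m Emx) r s =
  rowlast r * psi s + \sum_(d < L.-1) ((rowpoly r)`_d)%:P * phi s d.
Proof.
rewrite mxE.
under eq_bigr do rewrite !mxE.
rewrite eDL colsel_sum //; lia.
Qed.

Lemma BigE_pick (r s : 'I_L) : (s < n - k)%N ->
  (Big *m Emx) r s = ((rowpoly r)`_(D - s)%N)%:P.
Proof.
move=> hs; rewrite BigE_entry /psi hs mulr0 add0r.
have hD : (D - s < L.-1)%N by lia.
rewrite (bigD1 (Ordinal hD)) //= big1 ?addr0.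
  by rewrite /phi hs eqxx mulr1.
move=> i /eqP hi; rewrite /phi hs.
have -> : (i == (D - s)%N :> nat) = false.
  by apply/negP => /eqP h; apply: hi; apply: val_inj.
by rewrite mulr0.
Qed.

Lemma BigE_pt (r s : 'I_L) : (n - k <= s)%N ->
  (Big *m Emx) r s = rowlast r * - (f \Po pt s) + (rowpoly r \Po pt s).
Proof.
move=> hs; rewrite BigE_entry /psi /phi ltnNge hs /=.
by rewrite (@comp_wide _ _ (pt s) _ (size_rowpoly r)).
Qed.

Lemma pt_shift (j : 'I_m.+1) : pt (n - k + j) = pts_x alpha j.
Proof. by rewrite /pt addKn inord_val. Qed.

Lemma pts_case (j : 'I_m.+1) : f \Po pts_x alpha j = 0 \/ pts_x alpha j = 'X.
Proof.
rewrite /pts_x; case: eqP => h; last by right.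
by left; rewrite comp_polyCr rootf.
Qed.

Local Notation B := (Big *m Emx).

Lemma mulBE (r s : 'I_L) : \sum_j Big r j * Emx j s = B r s.
Proof. by rewrite mxE. Qed.

Lemma B_ur : ursubmx B = 0.
Proof.
apply/matrixP => i j; rewrite !mxE mulBE.
rewrite BigE_pt /=; last by lia.
rewrite pt_shift /rowlast /rowpoly /= ltn_ord.
rewrite comp_polyM comp_Xn_poly.
case: (pts_case j) => [->|->]; first by rewrite oppr0 mulr0 mul0r add0r.
by rewrite comp_polyXr mulrN mulrC addNr.
Qed.

Lemma B_dr : drsubmx B = Mmat k g alpha.
Proof.
apply/matrixP => i j; rewrite !mxE mulBE.
rewrite BigE_pt /=; last by lia.
rewrite pt_shift /rowlast /rowpoly /=.
have -> : (n - k + i < n - k)%N = false by lia.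
rewrite mul0r add0r.
have -> : (n - k + i < m + n - 2 * k)%N = (i < m - k)%N by lia.
case: ifP => hi.
  rewrite comp_polyM comp_Xn_poly; congr (_ * _ ^+ _); lia.
rewrite comp_Xn_poly; congr (_ ^+ _); lia.
Qed.

Lemma B_ul_det : \det (ulsubmx B) = 1.
Proof.
rewrite -det_tr det_trig.
  apply: big1 => i _; have hi := ltn_ord i; rewrite !mxE mulBE BigE_pick /=; last by lia.
  rewrite /rowpoly /= ltn_ord coefMXn.
  have -> : (m + n - k - 1 - i < n - k - 1 - i)%N = false by lia.
  have -> : (m + n - k - 1 - i - (n - k - 1 - i) = m)%N by lia.
  by rewrite f1.
apply/is_trig_mxP => i j hij; have hi := ltn_ord i; have hj := ltn_ord j.
rewrite !mxE mulBE BigE_pick /=; last by lia.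
rewrite /rowpoly /= ltn_ord coefMXn.
case: ifP => _; first by [].
rewrite nth_default //; apply: leq_trans szf _; lia.
Qed.

Lemma det_B : \det B = \det (Mmat k g alpha).
Proof.
rewrite -[B]submxK B_ur det_lblock B_ul_det B_dr mul1r //.
Qed.

Lemma eqL : L = (N + k.+1)%N.
Proof. lia. Qed.


Lemma det_Big : \det Big = Fk m n k f g.
Proof.
rewrite -(det_castmx eqL) -[castmx _ _]submxK.
set C := castmx _ _.
have hdl : dlsubmx C = 0.
  apply/matrixP => i j; rewrite !mxE castmxE mxE /= /colsel /rowpoly /rowlast /=.
  have hi := ltn_ord i; have hj := ltn_ord j.
  have e1 : (N + i < n - k)%N = false by lia.
  have e2 : (N + i < N)%N = false by lia.
  rewrite e1 e2 !coefXn.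
  case: ifP => h1.
    by have -> : (D - j == N + k - (N + i))%N = false by lia.
  by have -> : (j == N.-1 :> nat) by lia.
have hdr : drsubmx C = 1%:M.
  apply/matrixP => i j; rewrite !mxE castmxE mxE /= /colsel /rowpoly /rowlast /=.
  have hi := ltn_ord i; have hj := ltn_ord j.
  have e1 : (N + i < n - k)%N = false by lia.
  have e2 : (N + i < N)%N = false by lia.
  rewrite e1 e2 !coefXn.
  have -> : (N + j < N.-1)%N = false by lia.
  have -> : (N + j == N.-1)%N = false by lia.
  case: (eqVneq i j) => [<-|hij].
    by have -> : (D.+1 - (N + i) == N + k - (N + i))%N by lia; rewrite eqxx.
  have hij' : (i : nat) != j by [].
  have -> : (D.+1 - (N + j) == N + k - (N + i))%N = false by lia.
  by [].
have hul : ulsubmx C = subres_mx m n k f g (fun j => 'X^j) (fun _ => 0).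
  apply/matrixP => i j; rewrite !mxE castmxE mxE /= /colsel /rowpoly /rowlast /=.
  have hi := ltn_ord i; have hj := ltn_ord j.
  have -> : (i < N)%N by [].
  case: (ltnP j N.-1) => hj1.
    by case: ifP.
  have ej : (j == N.-1 :> nat) by lia.
  by rewrite ej; case: ifP.
by rewrite hdl det_ublock hdr det1 mulr1 hul.
Qed.

Local Notation V := (vdm (pts_x alpha)).

Lemma im0 : (m - k - 1 < m.+1)%N.
Proof. lia. Qed.
Local Notation i0 := (Ordinal im0).

Lemma W_lift (r : 'I_m) (t : 'I_m.+1) :
  drsubmx Emx (lift i0 r) t = V (lift 0 r) t.
Proof.
rewrite !mxE /= /colsel /phi /psi /bump /=.
have e1 : (n - k + t < n - k)%N = false by lia.
rewrite e1 pt_shift /=.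
have hr := ltn_ord r.
case: (ltnP r (m - k - 1)) => hr1.
  rewrite add0n.
  have -> : (n - k + r < N.-1)%N by lia.
  congr (_ ^+ _); lia.
rewrite add1n.
have -> : (n - k + r.+1 < N.-1)%N = false by lia.
have -> : (n - k + r.+1 == N.-1)%N = false by lia.
congr (_ ^+ _); lia.
Qed.

Lemma W_i0 (t : 'I_m.+1) : drsubmx Emx i0 t = - (f \Po pts_x alpha t).
Proof.
rewrite !mxE /= /colsel /phi /psi /=.
have e1 : (n - k + t < n - k)%N = false by lia.
rewrite e1 pt_shift /=.
have -> : (n - k + (m - k - 1) < N.-1)%N = false by lia.
by have -> : (n - k + (m - k - 1) == N.-1)%N by lia.
Qed.

Lemma cofactor_W (t : 'I_m.+1) :
  cofactor (drsubmx Emx) i0 t = (-1) ^+ (m - k - 1) * cofactor V 0 t.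
Proof.
rewrite /cofactor /= add0n exprD -mulrA; congr (_ * (_ * \det _)).
by apply/matrixP => r c; rewrite [LHS]mxE [LHS]mxE [RHS]mxE [RHS]mxE W_lift.
Qed.

Lemma f_V (t : 'I_m.+1) :
  f \Po pts_x alpha t = \sum_(r < m.+1) (f`_(m - r))%:P * V r t.
Proof.
rewrite (comp_wide _ szf) (reindex_inj rev_ord_inj) /=.
apply: eq_bigr => r _; rewrite mxE /=.
have hr := ltn_ord r.
by have -> : (m.+1 - r.+1 = m - r)%N by lia.
Qed.

Lemma det_W : \det (drsubmx Emx) = (-1) ^+ (m - k) * \det V.
Proof.
rewrite (expand_det_row _ i0).
under eq_bigr do rewrite W_i0 cofactor_W f_V.
transitivity (- (-1) ^+ (m - k - 1) * \sum_(r < m.+1) (f`_(m - r))%:P *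
   \sum_(t < m.+1) V r t * cofactor V 0 t).
  under eq_bigr => t _ do rewrite mulNr mulr_suml -sumrN.
  rewrite exchange_big mulr_sumr /=; apply: eq_bigr => r _.
  rewrite mulr_sumr mulr_sumr; apply: eq_bigr => t _; ring.
transitivity (- (-1) ^+ (m - k - 1) * \sum_(r < m.+1) (f`_(m - r))%:P * (\det V *+ (r == 0))).
  congr (_ * _); apply: eq_bigr => r _; congr (_ * _).
  have := mul_mx_adj V; move/matrixP/(_ r 0); rewrite !mxE => <-.
  by apply: eq_bigr => t _; rewrite /adjugate (mxE adjugate_key).
rewrite (bigD1 0) //= big1 ?addr0; last first.
  by move=> r /negPf ->; rewrite mulr0n mulr0.
rewrite subn0 f1 mul1r mulr1n; congr (_ * _).
rewrite [in RHS](_ : (m - k) = (m - k - 1).+1)%N; last by lia.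
by rewrite exprS mulN1r.
Qed.

Lemma det_Emx : \det Emx = (-1) ^+ (m - k) * \det V.
Proof.
rewrite -[Emx]submxK.
have hdl : dlsubmx Emx = 0.
  apply/matrixP => i j; rewrite !mxE /= /colsel /phi /psi /=.
  have hi := ltn_ord i; have hj := ltn_ord j; rewrite hj.
  case: ifP => h1; first by have -> : (D - (n - k + i) == D - j)%N = false by lia.
  case: ifP => h2 //.
  by have -> : (D.+1 - (n - k + i) == D - j)%N = false by lia.
have hul : ulsubmx Emx = 1%:M.
  apply/matrixP => i j; rewrite !mxE /= /colsel /phi /psi /=.
  have hi := ltn_ord i; have hj := ltn_ord j; rewrite hj.
  have -> : (i < N.-1)%N by lia.
  case: (eqVneq i j) => [<-|hij].
    by have -> : (D - i == D - i)%N by lia; rewrite eqxx.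
  have hij' : (i : nat) != j by [].
  by have -> : (D - i == D - j)%N = false by lia.
by rewrite hdl det_ublock hul det1 mul1r det_W.
Qed.

Lemma mainF : Fk m n k f g * ((-1) ^+ (m - k) * \det V) = \det (Mmat k g alpha).
Proof. by rewrite -det_Big -det_Emx -det_mulmx det_B. Qed.

End Main.

Definition rotmx (R : Type) (p a : nat) (A : 'M[R]_p.+1) : 'M[R]_p.+1 :=
  \matrix_(i, j) A (inord ((i + a) %% p.+1)) j.

Lemma det_rot1 (R : comPzRingType) p (A : 'M[R]_p.+1) :
  \det (rotmx 1 A) = (-1) ^+ p * \det A.
Proof.
rewrite (expand_det_row _ ord_max) (expand_det_row A 0) mulr_sumr.
apply: eq_bigr => j _.
have -> : rotmx 1 A ord_max j = A 0 j.
  rewrite mxE /= addn1 modnn; congr (A _ _); apply: val_inj; rewrite /= inordK //.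
rewrite [RHS]mulrCA; congr (_ * _).
rewrite /cofactor exprD -!mulrA; congr (_ * _).
rewrite add0n; congr (_ * \det _).
apply/matrixP => r c; rewrite [LHS]mxE [LHS]mxE [RHS]mxE [RHS]mxE mxE.
congr (A _ _); apply: val_inj; rewrite /= /bump /=.
have hr : (r < p)%N := ltn_ord r.
rewrite leqNgt hr add0n inordK; last by apply: ltn_pmod.
rewrite modn_small; [lia|]. by rewrite addn1 ltnS.
Qed.

Lemma det_rot (R : comPzRingType) p a (A : 'M[R]_p.+1) :
  \det (rotmx a A) = (-1) ^+ (a * p) * \det A.
Proof.
elim: a => [|a IH].
  rewrite mul0n expr0 mul1r; congr (\det _); apply/matrixP => i j; rewrite mxE.
  congr (A _ _); apply: val_inj; rewrite /= addn0 modn_small // inordK //.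
have -> : rotmx a.+1 A = rotmx 1 (rotmx a A).
  apply/matrixP => i j; rewrite !mxE; congr (A _ _); apply: val_inj.
  rewrite /= !inordK ?ltn_pmod //.
  by rewrite modnDml addn1 addSnnS.
by rewrite det_rot1 IH mulrA -exprD mulSn addnC.
Qed.

Lemma sign_sq (R : pzRingType) e : (-1) ^+ e * (-1) ^+ e = 1 :> R.
Proof. by rewrite -exprD -signr_odd addnn odd_double. Qed.

Lemma Gk_rot (K : fieldType) m n k (f g : {poly K}) :
  (k < m)%N -> (k < n)%N ->
  Gk m n k f g = (-1) ^+ ((n - k) * (m + n - 2 * k).-1) * Fk n m k g f.
Proof.
move=> km kn.
set p := (m + n - 2 * k).-1.
have e1 : (m + n - 2 * k = p.+1)%N by rewrite /p; lia.
have e2 : (n + m - 2 * k = p.+1)%N by rewrite /p; lia.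
rewrite /Gk /Fk -(det_castmx e1) -[X in _ = _ * X](det_castmx e2).
set S := castmx _ (subres_mx m n k f g _ _).
have -> : castmx (e2, e2) (subres_mx n m k g f (fun j => 'X^j) (fun=> 0)) =
  rotmx (n - k) S.
  apply/matrixP => i j; rewrite castmxE !mxE castmxE mxE /=.
  have hi := ltn_ord i; have hj := ltn_ord j.
  rewrite inordK; last by apply: ltn_pmod.
  have ej1 : (j < (n + m - 2 * k).-1)%N = (j < (m + n - 2 * k).-1)%N by lia.
  have ej2 : (n + m - k - 1 - j)%N = (m + n - k - 1 - j)%N by lia.
  rewrite ej1 ej2.
  case: (ltnP i (m - k)) => hi1.
    have -> : ((i + (n - k)) %% p.+1 = i + (n - k))%N by rewrite modn_small; lia.
    have -> : (i + (n - k) < n - k)%N = false by lia.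
    have -> : (m - k - 1 - i = m + n - 2 * k - 1 - (i + (n - k)))%N by lia.
    done.
  have -> : ((i + (n - k)) %% p.+1 = i - (m - k))%N.
    rewrite (_ : (i + (n - k) = (i - (m - k)) + p.+1)%N); last by lia.
    by rewrite modnDr modn_small; lia.
  have -> : (i - (m - k) < n - k)%N by lia.
  have -> : (n + m - 2 * k - 1 - i = n - k - 1 - (i - (m - k)))%N by lia.
  done.
rewrite det_rot mulrA sign_sq mul1r //.
Qed.

Lemma vdm_neq0 (K : fieldType) l (c : 'I_l -> {poly K}) :
  injective c -> \det (vdm c) != 0.
Proof.
move=> injc.
have -> : vdm c = row_perm (perm (@rev_ord_inj l)) (Vandermonde l (\row_i c i)).
  apply/matrixP => i j; rewrite !mxE permE /=; congr (_ ^+ _); lia.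
rewrite row_permE det_mulmx det_perm det_Vandermonde mulf_neq0 ?signr_eq0 //.
apply/prodf_neq0 => i _; apply/prodf_neq0 => j hij; rewrite !mxE subr_eq0.
by apply/eqP => /injc h; move: hij; rewrite h ltnn.
Qed.

Lemma pts_inj (K : fieldType) m (alpha : 'I_m -> K) :
  injective alpha -> injective (pts_x alpha).
Proof.
move=> ia i j; rewrite /pts_x; case: eqP => hi; case: eqP => hj.
- by move/polyC_inj/ia => [h]; apply: val_inj.
- by move=> h; have := size_polyC_leq1 (alpha (Ordinal hi)); rewrite h size_polyX.
- by move=> h; have := size_polyC_leq1 (alpha (Ordinal hj)); rewrite -h size_polyX.
- move=> _; apply: ord_inj; have := ltn_ord i; have := ltn_ord j.
  move/negP: hi; move/negP: hj; lia.
Qed.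

Lemma prod_props (K : fieldType) m (alpha : 'I_m -> K) :
  let f := \prod_(i < m) ('X - (alpha i)%:P) in
  [/\ size f = m.+1, f`_m = 1 & forall i, f.[alpha i] = 0].
Proof.
move=> f.
have sz : size f = m.+1 by rewrite size_prod_XsubC /index_enum unlock -enumT size_enum_ord.
split => //.
  by have /monicP := monic_prod_XsubC (index_enum 'I_m) predT alpha; rewrite /lead_coef sz.
by move=> i; rewrite horner_prod (bigD1 i) //= hornerXsubC subrr mul0r.
Qed.

Lemma fracE (F : fieldType) (a v s : F) : s * s = 1 -> v != 0 ->
  a = s * (a * (s * v)) / v.
Proof.
move=> ss hv.
have -> : s * (a * (s * v)) / v = (s * s) * a by field.
by rewrite ss mul1r.
Qed.

Lemma sign_even (R : pzRingType) x : (-1) ^+ (x.-1 * x) = 1 :> R.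
Proof. by rewrite -signr_odd oddM; case: x => //= x; rewrite andbN. Qed.

Theorem corollary3p13 (K : fieldType) (m n k : nat)
    (alpha : 'I_m -> K) (beta : 'I_n -> K) :
  injective alpha -> injective beta ->
  (k < m)%N -> (k < n)%N ->
  let f := \prod_(i < m) ('X - (alpha i)%:P) in
  let g := \prod_(j < n) ('X - (beta j)%:P) in
  (Fk m n k f g)%:F =
    (-1) ^+ (m - k) * (\det (Mmat k g alpha))%:F
      / (\det (vdm (pts_x alpha)))%:F
  /\
  (Gk m n k f g)%:F =
    (-1) ^+ ((m - k - 1) * (n - k)) * (\det (Mmat k f beta))%:F
      / (\det (vdm (pts_x beta)))%:F.
Proof.
move=> ia ib km kn; cbv zeta.
have [szf f1 rf] := prod_props alpha.
have [szg g1 rg] := prod_props beta.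
have hF := mainF km kn (eq_leq szg) (eq_leq szf) f1 rf.
have hG := mainF kn km (eq_leq szf) (eq_leq szg) g1 rg.
have hva : (\det (vdm (pts_x alpha)))%:F != 0.
  by rewrite tofrac_eq0; apply: vdm_neq0; apply: pts_inj.
have hvb : (\det (vdm (pts_x beta)))%:F != 0.
  by rewrite tofrac_eq0; apply: vdm_neq0; apply: pts_inj.
split.
  rewrite -hF !tofracM tofracXn tofracN tofrac1.
  set a := (Fk _ _ _ _ _)%:F; set v := (\det _)%:F; set s := (-1) ^+ (m - k).
  have ss : s * s = 1 by apply: sign_sq.
  by rewrite mulrCA [s * (s * v)]mulrA ss mul1r (mulfK hva).
rewrite (Gk_rot _ _ km kn) -hG !tofracM !tofracXn tofracN tofrac1.
set a := (Fk _ _ _ _ _)%:F; set v := (\det _)%:F.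
set s1 := (-1) ^+ (n - k); set s2 := (-1) ^+ ((m - k - 1) * (n - k)).
rewrite mulrCA [s2 * (s1 * v)]mulrA [a * _]mulrA (mulfK hvb) [RHS]mulrC; congr (_ * _).
rewrite /s1 /s2 -exprD.
have -> : ((n - k) * (m + n - 2 * k).-1 =
   ((m - k - 1) * (n - k) + (n - k)) + (n - k).-1 * (n - k))%N.
  have -> : ((m + n - 2 * k).-1 = (n - k) + (m - k - 1))%N by lia.
  have : (0 < n - k)%N by lia.
  case: (n - k)%N => [//|x _]; rewrite /=; ring.
by rewrite exprD sign_even mulr1.
Qed.
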